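(* For every $n\ge 3$, if $P$ is chosen uniformly at random from $\mathrm{Motz}^{\{1,2\}}(n)$, then the expected number of up steps and the expected number of down steps of $P$ both equal $\dfrac{n^2+n-6}{4n-6}$, and the expected number of umber steps and the expected number of denim steps both equal $\dfrac{n^2-4n+6}{4n-6}$.
   Context: $\mathrm{Motz}^{\{1,2\}}(n)$ is the set of lattice paths from $(0,0)$ to $(n,0)$ with steps $U=(1,1)$, $D=(1,-1)$ and horizontal steps $(1,0)$ colored umber or denim, never going below the $x$-axis, such that no umber step occurs at height $0$ and no denim step occurs before the first down step. *)

(* Defs.v *)
From HB Require Import structures.
From mathcomp Require Import all_boot all_order all_algebra.
Set Implicit Arguments. Unset Strict Implicit. Unset Printing Implicit Defensive.

(* Steps of a Motzkin-type path: U = (1,1), D = (1,-1),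
   Hu = horizontal (1,0) coloured umber, Hd = horizontal (1,0) coloured denim. *)
Inductive step := U | D | Hu | Hd.

Definition step_to_ord (s : step) : 'I_4 :=
  match s with U => inord 0 | D => inord 1 | Hu => inord 2 | Hd => inord 3 end.
Definition ord_to_step (i : 'I_4) : step :=
  match val i with 0 => U | 1 => D | 2 => Hu | _ => Hd end.
Lemma step_to_ordK : cancel step_to_ord ord_to_step.
Proof. by case; rewrite /ord_to_step /= inordK. Qed.

HB.instance Definition _ := Equality.copy step (can_type step_to_ordK).
HB.instance Definition _ := Finite.copy step (can_type step_to_ordK).

Fixpoint motz_from (h : nat) (seenD : bool) (s : seq step) : bool :=
  match s with
  | [::] => h == 0
  | U :: s' => motz_from h.+1 seenD s'
  | D :: s' => (0 < h) && motz_from h.-1 true s'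
  | Hu :: s' => (0 < h) && motz_from h seenD s'
  | Hd :: s' => seenD && motz_from h seenD s'
  end.

Definition motz12 (n : nat) : {set n.-tuple step} :=
  [set p : n.-tuple step | motz_from 0 false p].

Definition expect (n : nat) (X : seq step -> nat) : rat :=
  ((\sum_(p in motz12 n) X (val p))%:R / #|motz12 n|%:R)%R.

(* Main.v *)
Require Import Defs.
From mathcomp Require Import all_boot all_order all_algebra.
From mathcomp Require Import ring lra zify.
Import GRing.Theory Num.Theory.
Local Open Scope ring_scope.

Definition Gen (f : seq step -> rat) (m h : nat) (s : bool) : rat :=
  \sum_(t : m.-tuple step) (if motz_from h s t then f t else 0).

Definition stn (x : step) : nat := match x with U => 0 | D => 1 | Hu => 2 | Hd => 3 end.
Lemma step_eqE (x y : step) : (x == y) = (stn x == stn y)%N.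
Proof. by apply/eqP/eqP => [->|]; case: x; case: y. Qed.

Lemma sum_step (g : step -> rat) : \sum_(x : step) g x = g U + g D + g Hu + g Hd.
Proof.
have uq : uniq [:: U; D; Hu; Hd] by rewrite /= !inE !step_eqE.
rewrite (eq_bigl (fun x => x \in [:: U; D; Hu; Hd])); last by case; rewrite !inE !step_eqE.
rewrite -big_uniq // !big_cons big_nil /=. by rewrite addr0 !addrA.
Qed.

Lemma sum_tupleS (F : seq step -> rat) m :
  \sum_(t : m.+1.-tuple step) F t = \sum_(x : step) \sum_(t : m.-tuple step) F (x :: t).
Proof.
rewrite pair_big /=.
rewrite (reindex (fun p : step * m.-tuple step => [tuple of p.1 :: p.2])) //=.
exists (fun t : m.+1.-tuple step => (thead t, [tuple of behead t])).
  by move=> [x t] _ /=; congr pair; apply: val_inj.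
by move=> t _; rewrite [t in RHS]tuple_eta.
Qed.

Lemma Gen_S f m h s : Gen f m.+1 h s =
  Gen (fun t => f (U :: t)) m h.+1 s
  + (0 < h)%N%:R * Gen (fun t => f (D :: t)) m h.-1 true
  + (0 < h)%N%:R * Gen (fun t => f (Hu :: t)) m h s
  + s%:R * Gen (fun t => f (Hd :: t)) m h s.
Proof.
rewrite /Gen (sum_tupleS (fun t => if motz_from h s t then f t else 0)) sum_step /=.
have z : forall g : seq step -> rat, \sum_(t : m.-tuple step) (if false then g t else 0) = 0.
  by move=> g; apply: big1.
by case: (0 < h)%N; case: s; rewrite ?mul1r ?mul0r /= ?z.
Qed.


Lemma Gen0 f h s : Gen f 0 h s = (h == 0)%N%:R * f [::].
Proof.
rewrite /Gen (big_pred1 [tuple]) /=; last by move=> t; symmetry; apply/eqP; exact: tuple0.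
by case: h => [|h]; rewrite ?mul1r ?mul0r.
Qed.

Lemma GenD f g m h s : Gen (fun t => f t + g t) m h s = Gen f m h s + Gen g m h s.
Proof. by rewrite /Gen -big_split /=; apply: eq_bigr => t _; case: ifP; rewrite ?addr0. Qed.

Lemma GenZ a f m h s : Gen (fun t => a * f t) m h s = a * Gen f m h s.
Proof. by rewrite /Gen mulr_sumr; apply: eq_bigr => t _; case: ifP; rewrite ?mulr0. Qed.

Definition N m h s := Gen (fun _ => 1) m h s.
Definition GC c m h s := Gen (fun t => (count_mem c t)%:R) m h s.

Lemma GC_cons c x m h s : Gen (fun t => (count_mem c (x :: t))%:R) m h s =
   (x == c)%:R * N m h s + GC c m h s.
Proof.
rewrite /N /GC -GenZ -GenD /Gen; apply: eq_bigr => t _.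
by rewrite /= natrD mulr1.
Qed.

Lemma N_S m h s : N m.+1 h s = N m h.+1 s + (0<h)%N%:R * N m h.-1 true
  + (0<h)%N%:R * N m h s + s%:R * N m h s.
Proof. by rewrite /N Gen_S. Qed.

Lemma GC_S c m h s : GC c m.+1 h s =
   ((U == c)%:R * N m h.+1 s + GC c m h.+1 s)
 + (0<h)%N%:R * ((D == c)%:R * N m h.-1 true + GC c m h.-1 true)
 + (0<h)%N%:R * ((Hu == c)%:R * N m h s + GC c m h s)
 + s%:R * ((Hd == c)%:R * N m h s + GC c m h s).
Proof. by rewrite /GC Gen_S !GC_cons. Qed.

Definition cb n k : rat := ('C(n, k))%:R.
Lemma pas n k : cb n.+1 k.+1 = cb n k + cb n k.+1.
Proof. by rewrite /cb binS natrD addrC. Qed.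
Lemma cb0n k : cb 0 k.+1 = 0. Proof. by []. Qed.
Lemma cbsym m : cb (m.*2).+2 m = cb (m.*2).+2 m.+2.
Proof.
rewrite /cb -[in RHS](bin_sub (n := (m.*2).+2) (m := m.+2)); last by rewrite -addnn; lia.
by congr (_%:R); congr 'C(_, _); rewrite -addnn; lia.
Qed.

Definition Tc m h := cb m.*2 (m + h) - cb m.*2 (m + h).+1.

Lemma NT m h : N m h true = Tc m h.
Proof.
elim: m h => [|m IH] h.
  by rewrite /N Gen0 /Tc /cb; case: h => [|h].
rewrite N_S !IH; case: h => [|h] /=.
  rewrite !mul0r !mul1r !addr0 /Tc.
  case: m {IH} => [|m]; first by rewrite /cb.
  rewrite !addn0 !addnS !addSn !addn0 !doubleS !pas cbsym !pas; ring.
rewrite !mul1r /Tc !doubleS !addnS !addSn !pas; ring.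
Qed.

Lemma GC0 c h s : GC c 0 h s = 0.
Proof. by rewrite /GC Gen0 /= mulr0. Qed.

Definition TUc m h := (h%:R + 1) * cb m.*2 (m + h).+1 + h%:R * cb m.*2 (m + h).+2.
Definition THuc m h := h%:R * cb m.*2 (m + h) + h%:R * cb m.*2 (m + h).+1 + cb m.*2 (m + h).+2.

Lemma TU m h : GC U m.+1 h true = TUc m h.
Proof.
elim: m h => [|m IH] h.
  rewrite GC_S !step_eqE /= !GC0 /N !Gen0 /TUc /cb /=.
  by case: h => [|h]; rewrite /= ?mul0r ?mulr0 ?addr0.
rewrite GC_S !step_eqE /= !NT !IH; case: h => [|h] /=;
  rewrite /TUc /Tc ?mul0r ?mul1r ?addr0 ?add0r !addnS !addSn ?addn0 !doubleS !pas;
  rewrite ?natrS; ring.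
Qed.

Lemma THu m h : GC Hu m.+1 h true = THuc m h.
Proof.
elim: m h => [|m IH] h.
  rewrite GC_S !step_eqE /= !GC0 /N !Gen0 /THuc /cb /=.
  by case: h => [|h]; rewrite /= ?mul0r ?mulr0 ?addr0.
rewrite GC_S !step_eqE /= !NT !IH; case: h => [|h] /=;
  rewrite /THuc /Tc ?mul0r ?mul1r ?addr0 ?add0r !addnS !addSn ?addn0 !doubleS !pas;
  rewrite ?natrS; ring.
Qed.

Definition Fc m h := cb (m.*2).+1 (m + h).+1 - cb (m.*2).+1 (m + h).+2.

Lemma NF m h : N m.+1 h.+1 false = Fc m h.
Proof.
elim: m h => [|m IH] h.
  rewrite N_S /= NT /N !Gen0 /Fc /Tc /cb /=.
  by case: h => [|h]; rewrite /= ?mul0r ?mulr0 ?addr0.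
rewrite N_S /= !NT !IH /Fc /Tc ?mul0r ?mul1r ?addr0 ?add0r !addnS !addSn ?addn0 !doubleS !pas.
ring.
Qed.

Definition FUc m h := (h%:R + 2) * cb (m.*2).+1 (m + h).+2 + h%:R * cb (m.*2).+1 (m + h).+3.
Definition FHuc m h := (h%:R + 1) * cb (m.*2).+1 (m + h).+1 + h%:R * cb (m.*2).+1 (m + h).+2
   + cb (m.*2).+1 (m + h).+3.

Lemma FU1 h : GC U 1 h.+1 false = 0.
Proof. by rewrite GC_S !step_eqE /= !GC0 /N !Gen0 /= !mul0r !mulr0 !addr0. Qed.
Lemma FHu1 h : GC Hu 1 h.+1 false = 0.
Proof. by rewrite GC_S !step_eqE /= !GC0 /N !Gen0 /= !mul0r !mulr0 !addr0. Qed.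

Lemma FU m h : GC U m.+2 h.+1 false = FUc m h.
Proof.
elim: m h => [|m IH] h.
  rewrite GC_S !step_eqE /= !FU1 TU /FUc /Fc /TUc /cb /=.
  by case: h => [|h]; rewrite /= ?NF /Fc /cb /= ?mul0r ?mulr0 ?addr0 ?add0r.
rewrite GC_S !step_eqE /= !NF !TU !IH /FUc /Fc /TUc ?mul0r ?mul1r ?addr0 ?add0r
  !addnS !addSn ?addn0 !doubleS !pas ?natrS; ring.
Qed.

Lemma FHu m h : GC Hu m.+2 h.+1 false = FHuc m h.
Proof.
elim: m h => [|m IH] h.
  rewrite GC_S !step_eqE /= !FHu1 THu /FHuc /Fc /THuc /cb /=.
  by case: h => [|h]; rewrite /= ?NF /Fc /cb /= ?mul0r ?mulr0 ?addr0 ?add0r.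
rewrite GC_S !step_eqE /= !NF !THu !IH /FHuc /Fc /THuc ?mul0r ?mul1r ?addr0 ?add0r
  !addnS !addSn ?addn0 !doubleS !pas ?natrS; ring.
Qed.


Lemma expectE n (X : seq step -> nat) :
  expect n X = Gen (fun t => (X t)%:R) n 0 false / N n 0 false.
Proof.
rewrite /expect -sum1_card !natr_sum /N /Gen !(big_mkcond (fun p => p \in motz12 n)) /=.
by congr (_ / _); apply: eq_bigr => t _; rewrite inE.
Qed.

Lemma cnt_size (t : seq step) :
  (count_mem U t + count_mem D t + count_mem Hu t + count_mem Hd t)%N = size t.
Proof. elim: t => //= x t IH; case: x; rewrite !step_eqE /=; lia. Qed.

Lemma cnt_DU h s (t : seq step) : motz_from h s t -> count_mem D t = (count_mem U t + h)%N.
Proof.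
elim: t h s => [|x t IH] h s /=; first by move/eqP->.
case: x; rewrite !step_eqE /=.
- by move/IH ->; rewrite addnS addSn.
- by case: h => [|h] /andP [hp /IH ->] /=; lia.
- by case/andP => _ /IH ->; rewrite !add0n.
- by case/andP => _ /IH ->; rewrite !add0n.
Qed.

Lemma GCD n : GC D n 0 false = GC U n 0 false.
Proof.
rewrite /GC /Gen; apply: eq_bigr => t _; case: ifP => // /cnt_DU ->.
by rewrite addn0.
Qed.

Lemma GCall n h s : GC U n h s + GC D n h s + GC Hu n h s + GC Hd n h s = n%:R * N n h s.
Proof.
rewrite /GC /N /Gen -!big_split mulr_sumr; apply: eq_bigr => t _ /=.
case: ifP; rewrite ?addr0 ?mulr0 // => _.
by rewrite -!natrD cnt_size size_tuple mulr1.
Qed.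


Lemma N0 k : N k.+3 0 false = Fc k.+1 0.
Proof. by rewrite N_S /= NF ?mul0r ?addr0. Qed.
Lemma GU0 k : GC U k.+3 0 false = Fc k.+1 0 + FUc k 0.
Proof. by rewrite GC_S !step_eqE /= NF FU ?mul0r ?mul1r ?addr0. Qed.
Lemma GHu0 k : GC Hu k.+3 0 false = FHuc k 0.
Proof. by rewrite GC_S !step_eqE /= FHu ?mul0r ?mul1r ?addr0 ?add0r. Qed.

Lemma binrel1 k : (k%:R + 2) * cb (k.*2).+1 k.+2 = k%:R * cb (k.*2).+1 k.+1.
Proof.
rewrite /cb -!natrD -natrM -natrM; congr (_%:R).
have := mul_bin_left (k.*2).+1 k.+1; rewrite addn2 => ->.
by congr (_ * _); rewrite -addnn; lia.
Qed.
Lemma binrel2 k : (k%:R + 3) * cb (k.*2).+1 k.+3 = (k%:R - 1) * cb (k.*2).+1 k.+2.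
Proof.
case: k => [|k]; first by rewrite /cb /= !mulr0.
rewrite /cb -natrD -natrM -[(k.+1)%:R]natr1 addrK -natrM; congr (_%:R).
rewrite (_ : (k.+1 + 3)%N = k.+4); last lia.
rewrite mul_bin_left; congr (_ * _); rewrite -addnn; lia.
Qed.
Lemma binsym k : cb (k.*2).+1 k = cb (k.*2).+1 k.+1.
Proof.
rewrite /cb -[in RHS](bin_sub (n := (k.*2).+1) (m := k.+1)); last by rewrite -addnn; lia.
by congr (_%:R); congr 'C(_, _); rewrite -addnn; lia.
Qed.

Theorem mainTheorem13 (n : nat) (hn : (3 <= n)%N) :
  let r1 : rat := ((n%:R) ^+ 2 + n%:R - 6) / (4 * n%:R - 6) in
  let r2 : rat := ((n%:R) ^+ 2 - 4 * n%:R + 6) / (4 * n%:R - 6) in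
  [/\ expect n (count_mem U) = r1,
      expect n (count_mem D) = r1,
      expect n (count_mem Hu) = r2 &
      expect n (count_mem Hd) = r2].
Proof.
have [k ->] : exists k, n = k.+3 by exists (n - 3)%N; lia.
move=> r1 r2.
have eD : expect k.+3 (count_mem D) = expect k.+3 (count_mem U).
  by rewrite !expectE -!/(GC _ _ _ _) GCD.
have eHd : GC Hd k.+3 0 false = k.+3%:R * N k.+3 0 false - 2 * GC U k.+3 0 false
   - GC Hu k.+3 0 false.
  by rewrite -GCall GCD; ring.
rewrite eD !expectE -!/(GC _ _ _ _) eHd N0 GU0 GHu0 /Fc /FUc /FHuc /r1 /r2.
rewrite ?add0n ?addn0 /= !mul0r !add0r !addr0 !mul1r.
have p2 : forall M K, cb M.+2 K.+2 = cb M K + 2 * cb M K.+1 + cb M K.+2.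
  by move=> M K; rewrite !pas; ring.
rewrite !doubleS !p2 binsym.
have -> : (k.+3%:R : rat) = k%:R + 3 by rewrite -addn3 natrD.
have ha : 0 < cb (k.*2).+1 k.+1 by rewrite /cb ltr0n bin_gt0 -addnn; lia.
have hk : 0 <= (k%:R : rat) by [].
have hx : cb (k.*2).+1 k.+2 = k%:R * cb (k.*2).+1 k.+1 / (k%:R + 2).
  have k2 : (k%:R + 2 : rat) != 0 by apply: lt0r_neq0; lra.
  by rewrite -binrel1; field.
have hy : cb (k.*2).+1 k.+3 = (k%:R - 1) * cb (k.*2).+1 k.+2 / (k%:R + 3).
  have k3 : (k%:R + 3 : rat) != 0 by apply: lt0r_neq0; lra.
  by rewrite -binrel2; field.
rewrite hy hx.
move: ha hk; move: (cb _ _) (k%:R) => a K ha hk.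
split; field; repeat (apply/andP; split); apply: lt0r_neq0; nra.
Qed.
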